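(* Let $G$ be a finite group such that every element of prime order of $\mathrm{V}(\mathbb{Z}G)$ is rationally conjugate to an element of $G$ (i.e. for each such $u$ there are $g\in G$ and a unit $x\in\mathbb{Q}G$ with $x^{-1}ux=g$). Let $R$ be a field of characteristic zero, let $G\to \mathrm{GL}(n,R)$ be an injective group homomorphism, and let $\tau:\mathbb{Q}G\to M_n(R)$ be its unique extension to a ring homomorphism. Let $K$ be the kernel of the group homomorphism $\tau|_{\mathrm{U}(\mathbb{Q}G)}:\mathrm{U}(\mathbb{Q}G)\to\mathrm{GL}(n,R)$. Then $K\cap\mathrm{V}(\mathbb{Z}G)$ is torsion-free.
   Context: $\mathrm{U}(\mathbb{Q}G)$ denotes the unit group of the rational group algebra $\mathbb{Q}G$, and $\mathrm{V}(\mathbb{Z}G)$ the group of units of augmentation $1$ in $\mathbb{Z}G$ (augmentation of $\sum_g z_g g$ being $\sum_g z_g$). *)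

(* Defs.v *)
From HB Require Import structures.
From mathcomp Require Import all_boot all_order all_algebra all_fingroup.
Set Implicit Arguments. Unset Strict Implicit. Unset Printing Implicit Defensive.
Import GRing.Theory Num.Theory.
Local Open Scope ring_scope.

(* The rational group algebra QG of a finite group gT, elements are
   finitely supported functions gT -> rat, i.e. a = \sum_g a(g) g. *)
Definition QG (gT : finGroupType) := {ffun gT -> rat}.

Section GroupAlgebra.
Variable gT : finGroupType.

Definition ga_of (g : gT) : QG gT := [ffun x => ((x == g)%:R : rat)].
Definition ga_one : QG gT := ga_of 1%g.
Definition ga_mul (a b : QG gT) : QG gT :=
  [ffun g => \sum_(h : gT) a h * b (h^-1 * g)%g].
Definition ga_pow (a : QG gT) (k : nat) : QG gT := iter k (ga_mul a) ga_one.

Definition ga_unit (a : QG gT) : Prop :=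
  exists b : QG gT, ga_mul a b = ga_one /\ ga_mul b a = ga_one.

Definition ga_integral (a : QG gT) : Prop :=
  forall g : gT, exists z : int, a g = z%:~R.

Definition augmentation (a : QG gT) : rat := \sum_(g : gT) a g.

Definition in_VZG (u : QG gT) : Prop :=
  [/\ ga_integral u, augmentation u = 1 &
      exists v : QG gT, [/\ ga_integral v, ga_mul u v = ga_one & ga_mul v u = ga_one]].

Definition ga_has_order (u : QG gT) (p : nat) : Prop :=
  (0 < p)%N /\ ga_pow u p = ga_one /\ forall k, (0 < k < p)%N -> ga_pow u k <> ga_one.

Definition rat_conj_to_G (u : QG gT) : Prop :=
  exists (g : gT) (x xi : QG gT),
    [/\ ga_mul x xi = ga_one, ga_mul xi x = ga_one &
        ga_mul (ga_mul xi u) x = ga_of g].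

(* the unique ring extension tau : QG -> M_n(R) of rho : G -> GL(n,R)
   (R of char 0, so Q embeds via ratr) *)
Definition ga_tau (R : fieldType) (n : nat) (rho : gT -> 'M[R]_n) (a : QG gT)
  : 'M[R]_n := \sum_(g : gT) (ratr (a g)) *: rho g.

End GroupAlgebra.
Arguments ga_one {gT}.

(* Main.v *)
Require Import Defs.
From HB Require Import structures.
From mathcomp Require Import all_boot all_order all_algebra all_fingroup.
Import GRing.Theory Num.Theory.
Local Open Scope ring_scope.

Section Ratr.
Variable (R : fieldType) (HR : [pchar R] =i pred0).

Lemma nz_den (x : rat) : (denq x)%:~R != 0 :> R.
Proof.
have := denq_gt0 x; case: (denq x) => // m m0.
rewrite -[_%:~R]/(m%:R : R).
move/pcharf0P: HR => ->. by rewrite -lt0n -(ltz_nat 0).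
Qed.

Lemma ratrB' (x y : rat) : @ratr R (x - y) = @ratr R x - @ratr R y.
Proof.
have injZtoQ: @injective rat int intr by apply: intr_inj.
apply: (canLR (mulfK (nz_den _))); apply: (mulIf (nz_den x)).
rewrite mulrAC mulrBl divfK ?nz_den // mulrAC -!rmorphM.
apply: (mulIf (nz_den y)); rewrite mulrAC mulrBl divfK ?nz_den //.
rewrite -!(rmorphM, rmorphB); congr _%:~R; apply: injZtoQ.
rewrite !(rmorphM, rmorphB) /= [_ - _]lock /= -lock !numqE.
by rewrite (mulrAC y) -!mulrBl -mulrA mulrAC !mulrA.
Qed.

Lemma ratr0' : @ratr R 0 = 0.
Proof. by rewrite /ratr mul0r. Qed.

Lemma ratrD' (x y : rat) : @ratr R (x + y) = @ratr R x + @ratr R y.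
Proof.
have hN : @ratr R (- y) = - @ratr R y by have := ratrB' 0 y; rewrite !sub0r ratr0' sub0r.
by rewrite -{1}[y]opprK ratrB' hN opprK.
Qed.

Lemma ratrM' (x y : rat) : @ratr R (x * y) = @ratr R x * @ratr R y.
Proof.
have injZtoQ: @injective rat int intr by apply: intr_inj.
rewrite /ratr mulrC mulrAC; apply: canLR (mulKf (nz_den _)) _; rewrite !mulrA.
do 2!apply: canRL (mulfK (nz_den _)) _; rewrite -!rmorphM; congr _%:~R.
apply: injZtoQ; rewrite !rmorphM [x * y]lock /= !numqE -lock.
by rewrite -!mulrA mulrA mulrCA -!mulrA (mulrCA y).
Qed.

Lemma ratr1' : @ratr R 1 = 1.
Proof. by rewrite /ratr divr1. Qed.
End Ratr.

Section GA.
Variable gT : finGroupType.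
Implicit Types a b c u : QG gT.

Lemma ga_mul1l b : ga_mul ga_one b = b.
Proof.
apply/ffunP=> g; rewrite ffunE (bigD1 1%g) //= big1 => [|h /negbTE hn].
  by rewrite ffunE eqxx mul1r invg1 mul1g addr0.
by rewrite ffunE hn mul0r.
Qed.

Lemma ga_mul1r a : ga_mul a ga_one = a.
Proof.
apply/ffunP=> g; rewrite ffunE (bigD1 g) //= big1 => [|h hn].
  by rewrite ffunE mulVg eqxx mulr1 addr0.
by rewrite ffunE -eq_mulVg1 (negbTE hn) mulr0.
Qed.

Lemma ga_mulA a b c : ga_mul a (ga_mul b c) = ga_mul (ga_mul a b) c.
Proof.
apply/ffunP=> g; rewrite !ffunE.
under eq_bigr do rewrite ffunE big_distrr /=.
under [RHS]eq_bigr do rewrite ffunE big_distrl /=.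
rewrite [RHS]exchange_big /=.
apply: eq_bigr => h _.
rewrite [RHS](reindex_inj (mulgI h)) /=.
apply: eq_bigr => k _.
by rewrite mulKg invMg -mulgA mulrA.
Qed.

Lemma ga_powS u k : ga_pow u k.+1 = ga_mul u (ga_pow u k).
Proof. by []. Qed.

Lemma ga_pow1 u : ga_pow u 1 = u.
Proof. by rewrite ga_powS /= ga_mul1r. Qed.

Lemma ga_powD u (a b : nat) : ga_pow u (a + b) = ga_mul (ga_pow u a) (ga_pow u b).
Proof.
elim: a => [|a IH]; first by rewrite add0n /= ga_mul1l.
by rewrite addSn !ga_powS IH ga_mulA.
Qed.

Lemma ga_powM u (a b : nat) : ga_pow u (a * b) = ga_pow (ga_pow u a) b.
Proof.
elim: b => [|b IH]; first by rewrite muln0.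
by rewrite mulnS ga_powD IH ga_powS.
Qed.

Lemma ga_integral_one : ga_integral (ga_one : QG gT).
Proof. by move=> g; rewrite ffunE; exists (g == 1%g)%:Z. Qed.

Lemma ga_integral_mul a b : ga_integral a -> ga_integral b -> ga_integral (ga_mul a b).
Proof.
move=> ha hb g; rewrite ffunE.
apply: (big_ind (fun x : rat => exists z : int, x = z%:~R)).
- by exists 0.
- by move=> x y [z1 ->] [z2 ->]; exists (z1 + z2); rewrite rmorphD.
- move=> h _; have [z1 ->] := ha h; have [z2 ->] := hb (h^-1 * g)%g.
  by exists (z1 * z2); rewrite rmorphM.
Qed.

Lemma ga_integral_pow u k : ga_integral u -> ga_integral (ga_pow u k).
Proof.
move=> hu; elim: k => [|k IH]; first exact: ga_integral_one.
by rewrite ga_powS; apply: ga_integral_mul.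
Qed.

Lemma aug_one : augmentation (ga_one : QG gT) = 1.
Proof.
rewrite /augmentation (bigD1 1%g) //= big1 => [|h /negbTE hn].
  by rewrite ffunE eqxx addr0.
by rewrite ffunE hn.
Qed.

Lemma aug_mul a b : augmentation (ga_mul a b) = augmentation a * augmentation b.
Proof.
rewrite /augmentation.
under eq_bigr do rewrite ffunE.
rewrite exchange_big big_distrl /=.
apply: eq_bigr => h _; rewrite big_distrr /=.
rewrite (reindex_inj (mulgI h)) /=.
by apply: eq_bigr => k _; rewrite mulKg.
Qed.

Lemma aug_pow u k : augmentation u = 1 -> augmentation (ga_pow u k) = 1.
Proof.
move=> hu; elim: k => [|k IH]; first exact: aug_one.
by rewrite ga_powS aug_mul hu IH mulr1.
Qed.

Variables (R : fieldType) (HR : [pchar R] =i pred0) (n : nat) (rho : gT -> 'M[R]_n)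
  (rho1 : rho 1%g = 1%:M) (rhoM : forall g h : gT, rho (g * h)%g = rho g *m rho h).

Lemma tau_of g : ga_tau rho (ga_of g) = rho g.
Proof.
rewrite /ga_tau (bigD1 g) //= big1 => [|h /negbTE hn].
  by rewrite ffunE eqxx (ratr1' R) scale1r addr0.
by rewrite ffunE hn (ratr0' R) scale0r.
Qed.

Lemma tau_one : ga_tau rho ga_one = 1%:M.
Proof. by rewrite tau_of. Qed.

Lemma tau_mul a b : ga_tau rho (ga_mul a b) = ga_tau rho a *m ga_tau rho b.
Proof.
rewrite /ga_tau mulmx_suml.
under eq_bigr do rewrite ffunE (big_morph _ (@ratrD' R HR) (ratr0' R)) scaler_suml.
rewrite exchange_big /=.
apply: eq_bigr => h _; rewrite mulmx_sumr.
rewrite (reindex_inj (mulgI h)) /=.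
apply: eq_bigr => k _.
by rewrite mulKg (@ratrM' R HR) -scalerA rhoM -scalemxAl -scalemxAr.
Qed.

End GA.

Theorem mainTheorem8 (gT : finGroupType)
  (HG : forall u : QG gT, in_VZG u ->
          (exists p : nat, prime p /\ ga_has_order u p) -> rat_conj_to_G u)
  (R : fieldType) (HR : [pchar R] =i pred0)
  (n : nat) (rho : gT -> 'M[R]_n)
  (rho1 : rho 1%g = 1%:M)
  (rhoM : forall g h : gT, rho (g * h)%g = rho g *m rho h)
  (rho_inj : injective rho) :
  forall (u : QG gT) (k : nat),
    ga_unit u -> ga_tau rho u = 1%:M ->        (* u in K *)
    in_VZG u ->                                 (* u in V(ZG) *)
    (0 < k)%N -> ga_pow u k = ga_one ->         (* u has finite order *)
    u = ga_one.
Proof.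
move=> u k _ Tu [Iu Au _] k0 uk.
have [//|ne] := eqVneq u ga_one.
have exP : exists d, (0 < d)%N && (ga_pow u d == ga_one) by exists k; rewrite k0 uk eqxx.
case: (ex_minnP exP) => d /andP[d0 /eqP ud] dmin.
have d1 : (1 < d)%N.
  rewrite ltn_neqAle d0 andbT; apply/eqP => d1; move: ud.
  by rewrite -d1 ga_pow1; move/eqP: ne.
set p := pdiv d.
have pp : prime p by apply: pdiv_prime.
have pd : (p %| d)%N by apply: pdiv_dvd.
set m := (d %/ p)%N.
have dmp : d = (m * p)%N by rewrite divnK.
have m0 : (0 < m)%N by move: d0; rewrite dmp muln_gt0 => /andP[].
have p1 : (1 < p)%N by apply: prime_gt1.
have md : (m <= d)%N by rewrite dmp leq_pmulr ?prime_gt0.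
set v := ga_pow u m.
have Vv : in_VZG v.
  split; first exact: ga_integral_pow.
    exact: aug_pow.
  exists (ga_pow u (d - m)); split; first exact: ga_integral_pow.
    by rewrite /v -ga_powD subnKC.
  by rewrite /v -ga_powD subnK.
have ordv : ga_has_order v p.
  split; first by rewrite prime_gt0.
  split; first by rewrite /v -ga_powM -dmp.
  move=> j /andP[j0 jp] vj.
  have : (d <= m * j)%N by apply: dmin; rewrite muln_gt0 m0 j0 /= /v ga_powM vj eqxx.
  by rewrite dmp leqNgt ltn_pmul2l ?jp.
have [g [x [xi [xxi xix hg]]]] := HG v Vv (ex_intro _ p (conj pp ordv)).
have Tv : ga_tau rho v = 1%:M.
  rewrite /v; elim: (m) => [|j IH]; first exact: tau_one.
  by rewrite ga_powS (tau_mul _ _ HR _ _ rhoM) Tu IH mul1mx.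
have g1 : g = 1%g.
  apply: rho_inj; rewrite rho1 -(tau_of _ _ _ rho g) -hg.
  rewrite !(tau_mul _ _ HR _ _ rhoM) Tv mulmx1 -(tau_mul _ _ HR _ _ rhoM) xix.
  exact: tau_one.
have v1 : v = ga_one.
  have e1 : ga_mul (ga_mul (ga_mul xi v) x) xi = ga_mul xi v
    by rewrite -ga_mulA xxi ga_mul1r.
  by rewrite -[v]ga_mul1l -xxi -ga_mulA -e1 hg g1 ga_mul1l xxi.
case: ordv => _ [_ /(_ 1%N)]; rewrite ga_pow1 p1 => /(_ isT).
by rewrite v1.
Qed.
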